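(* For every $\alpha,\beta>1$ and $\varepsilon>0$: (a) there is an instance with $N=C$ and an outcome that satisfies $\alpha$-proportional fairness but not $(\alpha+1-\varepsilon)$-individual fairness; (b) there is an instance with $N=C$ and an outcome that satisfies $\beta$-individual fairness but not $(\beta+1-\varepsilon)$-proportional fairness; (c) there is an instance with $N\subseteq C$ and an outcome that satisfies $\beta$-individual fairness but not $(2\beta-\varepsilon)$-proportional fairness.
   Context: Let $(\mathcal X,d)$ be a metric space, $N=[n]$ a set of agents and $C$ a set of candidates located in $\mathcal X$, $k\in\mathbb N^+$; an outcome is $W\subseteq C$ with $|W|\le k$; $B(i,r)=\{x\in\mathcal X:d(i,x)\le r\}$; $d(i,W)=\min_{c\in W}d(i,c)$. $\alpha$-proportional fairness: there is no group $N'\subseteq N$ with $|N'|\ge n/k$ and candidate $c\in C\setminus W$ such that $\alpha\, d(i,c)<d(i,W)$ for all $i\in N'$. $\beta$-individual fairness (for instances with $N\subseteq C$): $d(i,W)\le\beta\, r(i)$ for all $i\in N$, where $r(i)=\min\{r\in\mathbb R: |B(i,r)\cap N|\ge n/k\}$. *)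

(* Defs.v *)
From HB Require Import structures.
From mathcomp Require Import all_boot all_order all_algebra.
From mathcomp Require Import reals.
Set Implicit Arguments. Unset Strict Implicit. Unset Printing Implicit Defensive.
Import Order.TTheory GRing.Theory Num.Theory.
Local Open Scope ring_scope.

Section Fairness.
Variable R : realType.
Variable T : Type.
Variable d : T -> T -> R.

Definition is_metric : Prop :=
  [/\ (forall x y, 0 <= d x y),
      (forall x y, d x y = 0 <-> x = y),
      (forall x y, d x y = d y x) &
      (forall x y z, d x z <= d x y + d y z)].

(* n agents 'I_n located by [ag], m candidates 'I_m located by [cd],
   committee size k. *)
Variables (n m k : nat) (ag : 'I_n -> T) (cd : 'I_m -> T).

Definition outcome (W : {set 'I_m}) : Prop := (#|W| <= k)%N.

(* alpha * d(i,c) < d(i,W) = min_{c' in W} d(i,c')  (with min over the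
   empty set being +infinity) *)
Definition closer_than_W (alpha : R) (W : {set 'I_m}) (i : 'I_n) (c : 'I_m) : Prop :=
  forall c', c' \in W -> alpha * d (ag i) (cd c) < d (ag i) (cd c').

Definition prop_fair (alpha : R) (W : {set 'I_m}) : Prop :=
  ~ exists (N' : {set 'I_n}) (c : 'I_m),
      [/\ n%:R / k%:R <= #|N'|%:R :> R, c \notin W &
          forall i, i \in N' -> closer_than_W alpha W i c].

Definition ball_agents (i : 'I_n) (r : R) : {set 'I_n} :=
  [set j | d (ag i) (ag j) <= r].

Definition is_radius (i : 'I_n) (r : R) : Prop :=
  n%:R / k%:R <= #|ball_agents i r|%:R :> R /\
  forall r', n%:R / k%:R <= #|ball_agents i r'|%:R :> R -> r <= r'.

Definition indiv_fair (beta : R) (W : {set 'I_m}) : Prop :=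
  forall i r, is_radius i r ->
    exists2 c, c \in W & d (ag i) (cd c) <= beta * r.

End Fairness.

(* Main.v *)
Require Import Defs.
From HB Require Import structures.
From mathcomp Require Import all_boot all_order all_algebra.
From mathcomp Require Import reals.
From mathcomp Require Import lra.
Import Order.TTheory GRing.Theory Num.Theory.
Local Open Scope ring_scope.

Ltac absr := repeat match goal with |- context [`|?e|] =>
  let h := fresh in have [h|h] := (lerP 0 e);
  [rewrite (ger0_norm h) | rewrite (ltr0_norm h)] end.

Ltac clear_all := repeat match goal with
  | H : is_true (_ <= #|_|%:R) |- _ => clear H
  | H : is_true (#|_|%:R <= _) |- _ => clear H
  | H : forall _, _ |- _ => clear H
  | H : is_true (_ \in _) |- _ => clear H
  | H : is_true (_ \notin _) |- _ => clear H
  end.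

Ltac eqr := repeat match goal with |- context [(?a == ?b)] => case: (a =P b) => ? /= end.

Section Aux.
Variable R : realType.

Definition dl (x y : R) : R := `|x - y|.
Definition ds (x y : R) : R := if x == y then 0 else `|x| + `|y|.

Lemma dl_metric : is_metric dl.
Proof.
rewrite /dl; split.
- by move=> x y.
- move=> x y; split; last by move=> ->; rewrite subrr normr0.
  by move/eqP; rewrite normr_eq0 subr_eq0 => /eqP.
- by move=> x y; rewrite distrC.
- move=> x y z; exact: ler_distD.
Qed.

Lemma ds_metric : is_metric ds.
Proof.
rewrite /ds; split.
- move=> x y; eqr => //; absr; lra.
- move=> x y; split; last by move=> ->; rewrite eqxx.
  eqr => //; absr; lra.
- move=> x y; rewrite eq_sym; eqr => //.
  by rewrite addrC.
- move=> x y z; eqr; subst => //; absr; lra.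
Qed.

Lemma rad_lb (T : Type) (d : T -> T -> R) n k (ag : 'I_n -> T) i r r0
  (S : {set 'I_n}) :
  n%:R / k%:R <= #|ball_agents d ag i r|%:R :> R ->
  #|S|%:R < n%:R / k%:R :> R ->
  (forall j, j \notin S -> r0 <= d (ag i) (ag j)) -> r0 <= r.
Proof.
move=> h1 h2 h3; rewrite leNgt; apply/negP => hr.
have hs : ball_agents d ag i r \subset S.
  apply/subsetP => j; rewrite inE => hj; apply: contraT => /h3 h.
  by move: (le_lt_trans (le_trans h hj) hr); rewrite ltxx.
have := subset_leq_card hs; rewrite -(ler_nat R) => h4; lra.
Qed.

Lemma notW (T : Type) (d : T -> T -> R) (hm : is_metric d) n
  (x : 'I_n -> T) a W i c :
  0 < a -> closer_than_W d x x a W i c -> i \notin W.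
Proof.
move=> ha H; apply/negP => iW; have := H i iW.
case: hm => h0 h1 _ _.
rewrite (proj2 (h1 (x i) (x i)) erefl) ltNge mulr_ge0 // ltW //.
Qed.

Definition xa (alpha : R) (i : 'I_5) : R := nth 0 [:: -(alpha+1); -1; 0; 1; alpha+1] i.
Definition xb (beta : R) (i : 'I_5) : R := nth 0 [:: 1; 0; -1; beta; beta] i.
Definition xc (beta : R) (i : 'I_4) : R := nth 0 [:: 1; -1; 0; 2 * beta - 1] i.
End Aux.
Arguments notW {R T d} hm {n x a W i c}.
Arguments rad_lb {R T d n k ag i r r0 S}.

Theorem theorem2 (R : realType) (alpha beta eps : R) :
  1 < alpha -> 1 < beta -> 0 < eps ->
  (* (a): N = C, i.e. agents and candidates are the same points 'I_n *)
  (exists (T : Type) (d : T -> T -> R) (n k : nat) (x : 'I_n -> T)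
          (W : {set 'I_n}),
     [/\ is_metric d /\ (0 < n)%N /\ (0 < k)%N, outcome k W,
         prop_fair d k x x alpha W &
         ~ indiv_fair d k x x (alpha + 1 - eps) W]) /\
  (* (b): N = C *)
  (exists (T : Type) (d : T -> T -> R) (n k : nat) (x : 'I_n -> T)
          (W : {set 'I_n}),
     [/\ is_metric d /\ (0 < n)%N /\ (0 < k)%N, outcome k W,
         indiv_fair d k x x beta W &
         ~ prop_fair d k x x (beta + 1 - eps) W]) /\
  (* (c): N \subseteq C, via an injection f of agents into candidates *)
  (exists (T : Type) (d : T -> T -> R) (n m k : nat) (cd : 'I_m -> T)
          (f : 'I_n -> 'I_m) (W : {set 'I_m}),
     [/\ is_metric d /\ (0 < n)%N /\ (0 < k)%N, injective f, outcome k W,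
         indiv_fair d k (cd \o f) cd beta W &
         ~ prop_fair d k (cd \o f) cd (2 * beta - eps) W]).
Proof.
move=> ha hb he; split; [|split].
- pose x := @xa R alpha.
  pose W := [set (@Ordinal 5 0 isT); (@Ordinal 5 4 isT)].
  pose S := (@Ordinal 5 1 isT) |: ((@Ordinal 5 2 isT) |: [set (@Ordinal 5 3 isT)]).
  have cS : #|S| = 3%N by rewrite !cardsU1 cards1 !inE.
  exists R, (@dl R), 5%N, 2%N, x, W; split => //.
  + by split; [exact: dl_metric|].
  + by rewrite /outcome cards2.
  + move=> [N' [c [hcard hc hcl]]].
    have hsub : N' \subset S.
      apply/subsetP => i hi; have := notW (dl_metric R) (lt_trans ltr01 ha) (hcl i hi).
      by case: i {hi} => [[|[|[|[|[|?]]]]] ?]; rewrite !inE.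
    have h3 : (3 <= #|N'|)%N.
      rewrite leqNgt; apply/negP => h; move: h; rewrite ltnS -(ler_nat R) => h; lra.
    have eN : N' = S.
      apply/eqP; rewrite -(subset_leqif_cards hsub).2 eqn_leq subset_leq_card //= cS //.
    subst N'.
    have i1 : (@Ordinal 5 1 isT) \in S by rewrite !inE.
    have i3 : (@Ordinal 5 3 isT) \in S by rewrite !inE.
    have w0 : (@Ordinal 5 0 isT) \in W by rewrite !inE.
    have w4 : (@Ordinal 5 4 isT) \in W by rewrite !inE.
    case: c hc hcl => [[|[|[|[|[|?]]]]] ?] hc hcl //; try by rewrite !inE in hc.
    * have := hcl _ i3 _ w4; clear_all; rewrite /dl /x /xa /=; rewrite ?normrN1 ?normr1 ?normr0 ?normrN; absr; lra.
    * have := hcl _ i3 _ w4; clear_all; rewrite /dl /x /xa /=; rewrite ?normrN1 ?normr1 ?normr0 ?normrN; absr; lra.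
    * have := hcl _ i1 _ w0; clear_all; rewrite /dl /x /xa /=; rewrite ?normrN1 ?normr1 ?normr0 ?normrN; absr; lra.
  + move=> hIF.
    have hr : is_radius (@dl R) 2 x (@Ordinal 5 2 isT) 1.
      split.
      * have hs : S \subset ball_agents (@dl R) x (@Ordinal 5 2 isT) 1.
          apply/subsetP => j; rewrite !inE => /orP [/eqP->|/orP [/eqP->|/eqP->]];
          clear_all; rewrite /dl /x /xa /=; rewrite ?normrN1 ?normr1 ?normr0 ?normrN; absr; lra.
        have := subset_leq_card hs; rewrite cS -(ler_nat R) => h; lra.
      * move=> r' h; apply: (rad_lb (S := [set (@Ordinal 5 2 isT)]) h).
          rewrite cards1; lra.
        by move=> [[|[|[|[|[|?]]]]] ?]; rewrite !inE // => _; clear_all; rewrite /dl /x /xa /=; rewrite ?normrN1 ?normr1 ?normr0 ?normrN; absr; lra.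
    have [c cW hc] := hIF _ _ hr.
    move: cW hc; rewrite !inE => /orP [/eqP->|/eqP->]; clear_all; rewrite /dl /x /xa /=; rewrite ?normrN1 ?normr1 ?normr0 ?normrN; absr; lra.
- pose x := @xb R beta.
  pose W := [set (@Ordinal 5 3 isT)].
  exists R, (@ds R), 5%N, 2%N, x, W; split => //.
  + by split; [exact: ds_metric|].
  + by rewrite /outcome cards1.
  + move=> i r [h1 _]; exists (@Ordinal 5 3 isT); first by rewrite inE.
    case: i h1 => [[|[|[|[|[|?]]]]] ?] h1 //.
    * have : 2 <= r.
        apply: (rad_lb (S := (@Ordinal 5 0 isT) |: [set (@Ordinal 5 1 isT)]) h1).
          rewrite cardsU1 cards1 !inE /=; lra.
        by move=> [[|[|[|[|[|?]]]]] ?]; rewrite !inE // => _; clear_all; rewrite /ds /x /xb /=; eqr; rewrite ?normrN1 ?normr1 ?normr0 ?normrN; absr; lra.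
      move=> h2; have := ler_wpM2l (ltW (lt_trans ltr01 hb)) h2.
      clear_all; rewrite /ds /x /xb /=; eqr; rewrite ?normrN1 ?normr1 ?normr0 ?normrN; absr; lra.
    * have : 1 <= r.
        apply: (rad_lb (S := [set (@Ordinal 5 1 isT)]) h1).
          rewrite cards1; lra.
        by move=> [[|[|[|[|[|?]]]]] ?]; rewrite !inE // => _; clear_all; rewrite /ds /x /xb /=; eqr; rewrite ?normrN1 ?normr1 ?normr0 ?normrN; absr; lra.
      move=> h2; have := ler_wpM2l (ltW (lt_trans ltr01 hb)) h2.
      clear_all; rewrite /ds /x /xb /=; eqr; rewrite ?normrN1 ?normr1 ?normr0 ?normrN; absr; lra.
    * have : 2 <= r.
        apply: (rad_lb (S := (@Ordinal 5 2 isT) |: [set (@Ordinal 5 1 isT)]) h1).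
          rewrite cardsU1 cards1 !inE /=; lra.
        by move=> [[|[|[|[|[|?]]]]] ?]; rewrite !inE // => _; clear_all; rewrite /ds /x /xb /=; eqr; rewrite ?normrN1 ?normr1 ?normr0 ?normrN; absr; lra.
      move=> h2; have := ler_wpM2l (ltW (lt_trans ltr01 hb)) h2.
      clear_all; rewrite /ds /x /xb /=; eqr; rewrite ?normrN1 ?normr1 ?normr0 ?normrN; absr; lra.
    * have : 0 <= r.
        apply: (rad_lb (S := set0) h1).
          rewrite cards0; lra.
        by move=> j _; case: (ds_metric R) => ->.
      move=> h2; have := mulr_ge0 (ltW (lt_trans ltr01 hb)) h2.
      clear_all; rewrite /ds /x /xb /=; eqr; rewrite ?normrN1 ?normr1 ?normr0 ?normrN; absr; lra.
    * have : 0 <= r.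
        apply: (rad_lb (S := set0) h1).
          rewrite cards0; lra.
        by move=> j _; case: (ds_metric R) => ->.
      move=> h2; have := mulr_ge0 (ltW (lt_trans ltr01 hb)) h2.
      clear_all; rewrite /ds /x /xb /=; eqr; rewrite ?normrN1 ?normr1 ?normr0 ?normrN; absr; lra.
  + apply; exists ((@Ordinal 5 0 isT) |: ((@Ordinal 5 1 isT) |: [set (@Ordinal 5 2 isT)])).
    exists (@Ordinal 5 1 isT); split.
    * rewrite !cardsU1 cards1 !inE /=; lra.
    * by rewrite inE.
    * move=> i hi c'; rewrite inE => /eqP ->.
      move: hi; rewrite !inE => /orP [/eqP->|/orP [/eqP->|/eqP->]];
        clear_all; rewrite /ds /x /xb /=; eqr; rewrite ?normrN1 ?normr1 ?normr0 ?normrN; absr; lra.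
- pose cd := @xc R beta.
  pose W := [set (@Ordinal 4 3 isT)].
  exists R, (@ds R), 2%N, 4%N, 1%N, cd, (widen_ord (isT : (2 <= 4)%N)), W; split => //.
  + by split; [exact: ds_metric|].
  + by move=> a b /(congr1 val) /= /val_inj.
  + by rewrite /outcome cards1.
  + move=> i r [h1 _]; exists (@Ordinal 4 3 isT); first by rewrite inE.
    have : 2 <= r.
      apply: (rad_lb (S := [set i]) h1).
        rewrite cards1; lra.
      move=> j; rewrite inE.
      by case: i {h1} => [[|[|?]] ?]; case: j => [[|[|?]] ?] //= _;
         clear_all; rewrite /ds /cd /xc /=; eqr; rewrite ?normrN1 ?normr1 ?normr0 ?normrN; absr; lra.
    move=> h2; have := ler_wpM2l (ltW (lt_trans ltr01 hb)) h2.
    by case: i {h1} => [[|[|?]] ?] //=; clear_all; rewrite /ds /cd /xc /=; eqr; rewrite ?normrN1 ?normr1 ?normr0 ?normrN; absr; lra.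
  + apply; exists setT, (@Ordinal 4 2 isT); split.
    * rewrite cardsT card_ord; lra.
    * by rewrite inE.
    * move=> i _ c'; rewrite inE => /eqP ->.
      by case: i => [[|[|?]] ?] //=; clear_all; rewrite /ds /cd /xc /=; eqr; rewrite ?normrN1 ?normr1 ?normr0 ?normrN; absr; lra.
Qed.
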